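(* Assume: (i) there is $L_f>0$ with $\|f(w,t)-f(y,t)\|_2\le L_f\|w-y\|_2$ for all $w,y\in\mathbb{R}^{N_s}$, $t\in[0,T]$; (ii) $\Delta t<\sigma_{\min}(A_{LM})/(L_f\sigma_{\max}(B_{LM}))$; (iii) there is $P>0$ with $\|\bar A\,\bar r(w)\|_2\ge P\|\bar r(w)\|_2$ for all $w\in\mathcal{S}$. Let $x\in\mathbb{R}^{N_sN_t}$ satisfy $\bar r(x)=0$, and set $K_r:=\sigma_{\min}(A_{LM})-\Delta t L_f\sigma_{\max}(B_{LM})$. Then for every $w\in\mathcal{S}$, $$\max_{1\le n\le N_t}\|x^n-w^n\|_2\le\|x-w\|_2\le\frac{1}{PK_r}\|\bar A\,\bar r(w)\|_2.$$ In particular, for $\tilde x\in\arg\min_{w\in\mathcal{S}}\|\bar A\,\bar r(w)\|_2$, $$\max_{1\le n\le N_t}\|x^n-\tilde x^n\|_2\le\|x-\tilde x\|_2\le\frac{1}{PK_r}\min_{w\in\mathcal{S}}\|\bar A\,\bar r(w)\|_2.$$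
   Context: Let $f:\mathbb{R}^{N_s}\times[0,T]\to\mathbb{R}^{N_s}$ be the velocity of the ODE $\dot x=f(x,t)$, $x(0)=x^0\in\mathbb{R}^{N_s}$. Use a uniform time grid $t^n=n\Delta t$, $n=0,\dots,N_t$, $\Delta t=T/N_t$. A linear multistep scheme is given by integers $k(n)\le n$ and coefficients $\alpha_j^n,\beta_j^n\in\mathbb{R}$, $j=0,\dots,k(n)$, $n=1,\dots,N_t$, with $\alpha_0^n\neq0$. For $w=(w^1,\dots,w^{N_t})\in\mathbb{R}^{N_sN_t}$ (blocks $w^n\in\mathbb{R}^{N_s}$) set $w^0:=x^0$ and define the residual at step $n$ by $r^n(w)=\sum_{j=0}^{k(n)}\alpha_j^n w^{n-j}-\Delta t\sum_{j=0}^{k(n)}\beta_j^n f(w^{n-j},t^{n-j})$, and the space–time residual $\bar r(w)=(r^1(w),\dots,r^{N_t}(w))\in\mathbb{R}^{N_sN_t}$. Let $A_{LM},B_{LM}\in\mathbb{R}^{N_sN_t\times N_sN_t}$ be the block lower-triangular matrices (blocks of size $N_s\times N_s$) whose $(n,n-j)$ block is $\alpha_j^n I_{N_s}$, resp. $\beta_j^n I_{N_s}$, for $0\le j\le k(n)$ with $n-j\ge1$, and zero otherwise. $\sigma_{\max}(M)$, $\sigma_{\min}(M)$ denote the largest and smallest singular values of $M$; $\|\cdot\|_2$ is the Euclidean norm on $\mathbb{R}^{N_sN_t}$. The space–time trial subspace is the affine subspace $\mathcal{S}=\{(x^0,\dots,x^0)+\sum_{i=1}^{n_{st}}c_i\pi_i: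 c\in\mathbb{R}^{n_{st}}\}\subseteq\mathbb{R}^{N_sN_t}$ for given vectors $\pi_1,\dots,\pi_{n_{st}}\in\mathbb{R}^{N_sN_t}$; $\bar A\in\mathbb{R}^{\bar z\times N_sN_t}$ is a weighting matrix. *)

(* Defs.v *)
From HB Require Import structures.
From mathcomp Require Import all_boot all_order all_algebra.
Set Implicit Arguments. Unset Strict Implicit. Unset Printing Implicit Defensive.
Import Order.TTheory GRing.Theory Num.Theory.
Local Open Scope ring_scope.

Section LM.
Variable R : rcfType.

Definition norm2 (m : nat) (v : 'cV[R]_m) : R := Num.sqrt (\sum_(i < m) v i 0 ^+ 2).

(* Largest / smallest singular value of a square matrix, variationally:
   sigma_max(M) = max_{|v|=1} |M v|,  sigma_min(M) = min_{|v|=1} |M v|. *)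
Definition is_sigma_max (m : nat) (M : 'M[R]_m) (s : R) : Prop :=
  (exists v : 'cV[R]_m, norm2 v = 1 /\ norm2 (M *m v) = s) /\
  (forall v : 'cV[R]_m, norm2 v = 1 -> norm2 (M *m v) <= s).
Definition is_sigma_min (m : nat) (M : 'M[R]_m) (s : R) : Prop :=
  (exists v : 'cV[R]_m, norm2 v = 1 /\ norm2 (M *m v) = s) /\
  (forall v : 'cV[R]_m, norm2 v = 1 -> s <= norm2 (M *m v)).

Variables Ns Nt : nat.

(* Space-time vectors live in 'cV_(Nt * Ns); the index mxvec_index i a
   (i : 'I_Nt, a : 'I_Ns) is the a-th component of block w^(i+1)
   (row-major stacking: blocks w^1, ..., w^Nt). *)
Definition st_idx (p : 'I_(Nt * Ns)) : 'I_Nt * 'I_Ns :=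
  enum_val (cast_ord (esym (@mxvec_cast Nt Ns)) p).

Definition blk (w : 'cV[R]_(Nt * Ns)) (i : 'I_Nt) : 'cV[R]_Ns :=
  \col_(a < Ns) w (mxvec_index i a) 0.

Definition rep (x0 : 'cV[R]_Ns) : 'cV[R]_(Nt * Ns) :=
  \col_(p < Nt * Ns) x0 (st_idx p).2 0.

Variable T : R.
Definition dt : R := T / Nt%:R.
Definition tgrid (m : nat) : R := m%:R * dt.

Variable f : 'cV[R]_Ns -> R -> 'cV[R]_Ns.
Variable x0 : 'cV[R]_Ns.
Variable k : nat -> nat.
Variables alpha beta : nat -> nat -> R.  (* alpha n j = alpha_j^n *)

Definition state (w : 'cV[R]_(Nt * Ns)) (m : nat) : 'cV[R]_Ns :=
  match m with
  | 0 => x0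
  | m'.+1 => match (insub m' : option 'I_Nt) with Some i => blk w i | None => 0 end
  end.

Definition resid (w : 'cV[R]_(Nt * Ns)) (n : nat) : 'cV[R]_Ns :=
  \sum_(j < (k n).+1)
     (alpha n j *: state w (n - j)%N - (dt * beta n j) *: f (state w (n - j)%N) (tgrid (n - j)%N)).

Definition rbar (w : 'cV[R]_(Nt * Ns)) : 'cV[R]_(Nt * Ns) :=
  \col_(p < Nt * Ns) resid w (st_idx p).1.+1 (st_idx p).2 0.

(* Block lower-triangular matrix with (n, n-j) block c_j^n I_Ns for
   0 <= j <= k(n), n-j >= 1; zero otherwise.  With 0-based block indices
   i = n-1, i' = n-j-1. *)
Definition LMmat (c : nat -> nat -> R) : 'M[R]_(Nt * Ns) :=
  \matrix_(p < Nt * Ns, q < Nt * Ns)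
    let i := val (st_idx p).1 in let i' := val (st_idx q).1 in
    if ((st_idx p).2 == (st_idx q).2) && (i' <= i)%N && (i - i' <= k i.+1)%N
    then c i.+1 (i - i')%N else 0.

Definition A_LM := LMmat alpha.
Definition B_LM := LMmat beta.

Definition inS (nst : nat) (pi : 'I_nst -> 'cV[R]_(Nt * Ns)) (w : 'cV[R]_(Nt * Ns)) : Prop :=
  exists c : 'I_nst -> R, w = rep x0 + \sum_(i < nst) c i *: pi i.

End LM.

(* Main.v *)
Require Import Defs.
From HB Require Import structures.
From mathcomp Require Import all_boot all_order all_algebra.
From mathcomp Require Import ring lra.
Import Order.TTheory GRing.Theory Num.Theory.
Set Implicit Arguments. Unset Strict Implicit.
Local Open Scope ring_scope.

Section Helpers.
Variable R : rcfType.

Definition ns (m : nat) (v : 'cV[R]_m) : R := \sum_(i < m) v i 0 ^+ 2.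

Lemma ns_ge0 m (v : 'cV[R]_m) : 0 <= ns v.
Proof. by apply: sumr_ge0 => i _; exact: sqr_ge0. Qed.

Lemma norm2E m (v : 'cV[R]_m) : norm2 v = Num.sqrt (ns v).
Proof. by []. Qed.

Lemma norm2_ge0 m (v : 'cV[R]_m) : 0 <= norm2 v.
Proof. exact: sqrtr_ge0. Qed.

Lemma norm2_sqr m (v : 'cV[R]_m) : norm2 v ^+ 2 = ns v.
Proof. by rewrite norm2E sqr_sqrtr // ns_ge0. Qed.

Lemma nsZ m c (v : 'cV[R]_m) : ns (c *: v) = c ^+ 2 * ns v.
Proof.
rewrite /ns mulr_sumr; apply: eq_bigr => i _; rewrite mxE; ring.
Qed.

Lemma norm2Z m c (v : 'cV[R]_m) : norm2 (c *: v) = `|c| * norm2 v.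
Proof. by rewrite !norm2E nsZ sqrtrM ?sqr_ge0 // sqrtr_sqr. Qed.

Lemma norm2N m (v : 'cV[R]_m) : norm2 (- v) = norm2 v.
Proof. by rewrite -scaleN1r norm2Z normrN normr1 mul1r. Qed.

Lemma ns_eq0 m (v : 'cV[R]_m) : ns v = 0 -> v = 0.
Proof.
move=> h; apply/matrixP => i j; rewrite ord1 mxE.
have : v i 0 ^+ 2 = 0 by apply: (psumr_eq0P _ h) => // k _; exact: sqr_ge0.
by move/eqP; rewrite sqrf_eq0 => /eqP.
Qed.

Lemma norm2_eq0 m (v : 'cV[R]_m) : norm2 v = 0 -> v = 0.
Proof.
move=> h; apply: ns_eq0; rewrite -norm2_sqr h; ring.
Qed.

Lemma cs m (a b : 'I_m -> R) :
  (\sum_i a i * b i) ^+ 2 <= (\sum_i a i ^+ 2) * (\sum_i b i ^+ 2).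
Proof.
set Y := fun i j => a i ^+ 2 * b j ^+ 2 - (a i * b i) * (a j * b j).
have E1 : \sum_i \sum_j Y i j = (\sum_i a i ^+ 2) * (\sum_i b i ^+ 2) - (\sum_i a i * b i) ^+ 2.
  rewrite expr2 !mulr_suml -sumrB; apply: eq_bigr => i _.
  by rewrite !mulr_sumr -sumrB; apply: eq_bigr => j _.
have E2 : \sum_i \sum_j (a i * b j - a j * b i) ^+ 2 = 2 * \sum_i \sum_j Y i j.
  have -> : \sum_i \sum_j (a i * b j - a j * b i) ^+ 2 = \sum_i \sum_j (Y i j + Y j i).
    apply: eq_bigr => i _; apply: eq_bigr => j _; rewrite /Y; ring.
  rewrite (eq_bigr (fun i => \sum_j Y i j + \sum_j Y j i)); last by move=> i _; rewrite big_split.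
  rewrite big_split /= [X in _ + X]exchange_big /=; ring.
have : 0 <= \sum_i \sum_j (a i * b j - a j * b i) ^+ 2.
  by apply: sumr_ge0 => i _; apply: sumr_ge0 => j _; exact: sqr_ge0.
rewrite E2 E1 pmulr_rge0 // subr_ge0 //.
Qed.

Lemma norm2D m (u v : 'cV[R]_m) : norm2 (u + v) <= norm2 u + norm2 v.
Proof.
have h0 : 0 <= norm2 u + norm2 v by rewrite addr_ge0 // norm2_ge0.
rewrite -(ger0_norm h0) -sqrtr_sqr norm2E ler_sqrt ?sqr_ge0 //.
have -> : ns (u + v) = ns u + ns v + 2 * \sum_i u i 0 * v i 0.
  rewrite /ns mulr_sumr -!big_split /=; apply: eq_bigr => i _; rewrite mxE; ring.
rewrite sqrrD !norm2_sqr.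
have : \sum_i u i 0 * v i 0 <= norm2 u * norm2 v.
  apply: le_trans (ler_norm _) _.
  rewrite -sqrtr_sqr !norm2E -sqrtrM ?ns_ge0 // ler_sqrt; last by rewrite mulr_ge0 ?ns_ge0.
  exact: cs.
move=> h; rewrite mulr2n mulrDl mul1r; lra.
Qed.


Section Struct.
Variables Ns Nt : nat.

Lemma st_idx_mxvec (i : 'I_Nt) (a : 'I_Ns) : st_idx (mxvec_index i a) = (i, a).
Proof. by rewrite /st_idx /mxvec_index cast_ordK enum_rankK. Qed.

Lemma mxvec_st (p : 'I_(Nt * Ns)) : mxvec_index (st_idx p).1 (st_idx p).2 = p.
Proof. by rewrite /st_idx /mxvec_index -surjective_pairing enum_valK cast_ordKV. Qed.

Lemma sum_blocks (F : 'I_(Nt * Ns) -> R) :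
  \sum_p F p = \sum_(i < Nt) \sum_(a < Ns) F (mxvec_index i a).
Proof.
rewrite pair_big /= (reindex (fun ia : 'I_Nt * 'I_Ns => mxvec_index ia.1 ia.2)) //.
exists (@st_idx Ns Nt) => [[i a] _|p _]; first by rewrite st_idx_mxvec.
exact: mxvec_st.
Qed.

Lemma ns_blocks (v : 'cV[R]_(Nt * Ns)) : ns v = \sum_(i < Nt) ns (blk v i).
Proof.
rewrite /ns sum_blocks; apply: eq_bigr => i _; apply: eq_bigr => a _; by rewrite mxE.
Qed.

Lemma blkB (v w : 'cV[R]_(Nt * Ns)) i : blk (v - w) i = blk v i - blk w i.
Proof. by apply/matrixP => a j; rewrite !mxE. Qed.

Definition stack (g : nat -> 'cV[R]_Ns) : 'cV[R]_(Nt * Ns) :=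
  \col_p g (st_idx p).1.+1 (st_idx p).2 0.

Lemma blk_stack g i : blk (stack g) i = g i.+1.
Proof. by apply/matrixP => a j; rewrite ord1 !mxE st_idx_mxvec. Qed.

Lemma state_succ x0 (w : 'cV[R]_(Nt * Ns)) (i : 'I_Nt) : state x0 w i.+1 = blk w i.
Proof. by rewrite /= valK. Qed.

Lemma stack_state x0 (v w : 'cV[R]_(Nt * Ns)) :
  stack (fun m => state x0 v m - state x0 w m) = v - w.
Proof.
apply/matrixP => p j; rewrite ord1 !mxE /=.
by rewrite ?valK ?mxE mxvec_st.
Qed.


Lemma LM_stack (k : nat -> nat) (c : nat -> nat -> R) g (i : 'I_Nt) (a : 'I_Ns) :
  g 0%N = 0 -> (k i.+1 <= i.+1)%N ->
  (LMmat Ns Nt k c *m stack g) (mxvec_index i a) 0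
    = \sum_(j < (k i.+1).+1) c i.+1 j * g (i.+1 - j)%N a 0.
Proof.
move=> g0 hk.
pose F := fun n : nat => (if (n <= i)%N && (i - n <= k i.+1)%N then c i.+1 (i - n)%N else 0) * g n.+1 a 0.
pose H := fun j : nat => c i.+1 j * g (i.+1 - j)%N a 0.
transitivity (\sum_(i' < Nt) F i').
  rewrite mxE sum_blocks; apply: eq_bigr => i' _; rewrite (bigD1 a) //= big1 ?addr0.
    by rewrite !mxE !st_idx_mxvec /= eqxx.
  by move=> b hb; rewrite !mxE !st_idx_mxvec /= eq_sym (negbTE hb) mul0r.
rewrite -(big_mkord xpredT F) (big_cat_nat _ (n:=i.+1)) //=.
have -> : \sum_(i.+1 <= n < Nt) F n = 0.
  rewrite big_nat_cond big1 // => n /andP [/andP [hn _] _].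
  by rewrite /F leqNgt hn /= mul0r.
rewrite addr0.
rewrite big_nat_rev /=.
transitivity (\sum_(0 <= j < i.+2) (if (j <= k i.+1)%N then H j else 0)).
  rewrite [RHS]big_nat_recr //= /H subnn g0 mxE mulr0 if_same addr0.
  apply: eq_big_nat => j /andP [_ hj].
  rewrite /F add0n subSS leq_subr /= subKn // -subSn //.
  by case: ifP => _ //; rewrite mul0r.
rewrite -(big_mkord xpredT H) (@big_nat_widen _ _ _ 0 _ i.+2) //.
rewrite [RHS]big_mkcond /=; apply: eq_bigr => j _; by rewrite ltnS.
Qed.


Lemma rbar_diff T f x0 k alpha beta (v w : 'cV[R]_(Nt * Ns)) :
  (forall n, (1 <= n <= Nt)%N -> (k n <= n)%N) ->
  rbar T f x0 k alpha beta v - rbar T f x0 k alpha beta w =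
  A_LM Ns Nt k alpha *m (v - w) - dt Nt T *: (B_LM Ns Nt k beta *m
     stack (fun m => f (state x0 v m) (tgrid Nt T m) - f (state x0 w m) (tgrid Nt T m))).
Proof.
move=> hk; apply/matrixP => p j; rewrite ord1 -[p]mxvec_st.
move: (st_idx p).1 (st_idx p).2 => i a.
have hki : (k i.+1 <= i.+1)%N by apply: hk; rewrite ltn_ord.
rewrite /A_LM /B_LM -[v - w in RHS](stack_state x0) [in RHS]mxE.
rewrite (@LM_stack k alpha (fun m => state x0 v m - state x0 w m) i a) ?subrr //.
rewrite [in RHS]mxE [in RHS]mxE (@LM_stack k beta (fun m => f (state x0 v m) (tgrid Nt T m) - f (state x0 w m) (tgrid Nt T m)) i a) ?subrr //.
rewrite !mxE !st_idx_mxvec /=.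
rewrite /resid !summxE mulr_sumr -!sumrB; apply: eq_bigr => j' _.
rewrite !mxE; ring.
Qed.


End Struct.

Lemma smin_bound m (M : 'M[R]_m) s : is_sigma_min M s -> forall v, s * norm2 v <= norm2 (M *m v).
Proof.
move=> [_ h] v; have [z|nz] := eqVneq (norm2 v) 0.
  by rewrite z mulr0 norm2_ge0.
have pos : 0 < norm2 v by rewrite lt_def nz norm2_ge0.
have := h ((norm2 v)^-1 *: v).
rewrite norm2Z ger0_norm ?invr_ge0 ?norm2_ge0 // mulVf // => /(_ erefl).
rewrite -scalemxAr norm2Z ger0_norm ?invr_ge0 ?norm2_ge0 //.
by rewrite ler_pdivlMl // mulrC.
Qed.

Lemma smax_bound m (M : 'M[R]_m) s : is_sigma_max M s -> forall v, norm2 (M *m v) <= s * norm2 v.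
Proof.
move=> [[u [_ hu]] h] v; have s0 : 0 <= s by rewrite -hu norm2_ge0.
have [z|nz] := eqVneq (norm2 v) 0.
  by move: (norm2_eq0 z) => v0; rewrite v0 mulmx0 -v0 z mulr0.
have pos : 0 < norm2 v by rewrite lt_def nz norm2_ge0.
have := h ((norm2 v)^-1 *: v).
rewrite norm2Z ger0_norm ?invr_ge0 ?norm2_ge0 // mulVf // => /(_ erefl).
rewrite -scalemxAr norm2Z ger0_norm ?invr_ge0 ?norm2_ge0 //.
by rewrite ler_pdivrMl // mulrC.
Qed.

End Helpers.

Unset Implicit Arguments. Set Strict Implicit.

Theorem mainTheorem6 (R : rcfType) (Ns Nt : nat) (T : R)
  (f : 'cV[R]_Ns -> R -> 'cV[R]_Ns) (x0 : 'cV[R]_Ns)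
  (k : nat -> nat) (alpha beta : nat -> nat -> R)
  (nst : nat) (pi : 'I_nst -> 'cV[R]_(Nt * Ns))
  (zbar : nat) (Abar : 'M[R]_(zbar, Nt * Ns))
  (Lf P sAmin sBmax : R) (x : 'cV[R]_(Nt * Ns)) :
  (0 < Nt)%N -> 0 < T ->
  (forall n : nat, (1 <= n <= Nt)%N -> (k n <= n)%N /\ alpha n 0%N != 0) ->
  is_sigma_min (A_LM Ns Nt k alpha) sAmin ->
  is_sigma_max (B_LM Ns Nt k beta) sBmax ->
  (* (i) Lipschitz continuity *)
  0 < Lf ->
  (forall (w y : 'cV[R]_Ns) (t : R), 0 <= t <= T ->
      norm2 (f w t - f y t) <= Lf * norm2 (w - y)) ->
  (* (ii) time step restriction *)
  dt Nt T < sAmin / (Lf * sBmax) ->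
  (* (iii) *)
  0 < P ->
  (forall w, inS x0 pi w ->
      P * norm2 (rbar T f x0 k alpha beta w)
        <= norm2 (Abar *m rbar T f x0 k alpha beta w)) ->
  (* x solves the full-order scheme *)
  rbar T f x0 k alpha beta x = 0 ->
  let Kr := sAmin - dt Nt T * Lf * sBmax in
  (forall w, inS x0 pi w ->
     \big[Num.max/0]_(i < Nt) norm2 (blk x i - blk w i) <= norm2 (x - w)
     /\ norm2 (x - w)
        <= (P * Kr)^-1 * norm2 (Abar *m rbar T f x0 k alpha beta w))
  /\
  (forall xt, inS x0 pi xt ->
     (forall w, inS x0 pi w ->
        norm2 (Abar *m rbar T f x0 k alpha beta xt)
          <= norm2 (Abar *m rbar T f x0 k alpha beta w)) ->
     \big[Num.max/0]_(i < Nt) norm2 (blk x i - blk xt i) <= norm2 (x - xt)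
     /\ norm2 (x - xt)
        <= (P * Kr)^-1 * norm2 (Abar *m rbar T f x0 k alpha beta xt)).
Proof.
move=> hNt hT hk hA hB hLf hlip hdt hP hPbd hx Kr.
have hk' : forall n, (1 <= n <= Nt)%N -> (k n <= n)%N by move=> n /hk [].
have dtpos : 0 < dt Nt T by rewrite /dt divr_gt0 // ltr0n.
have [[u [_ hu]] _] := hB.
have sB0 : 0 <= sBmax by rewrite -hu norm2_ge0.
have hKr : 0 < Kr.
  have [z|nz] := eqVneq sBmax 0.
    move: hdt; rewrite z mulr0 invr0 mulr0 => h.
    by move: (lt_trans dtpos h); rewrite ltxx.
  have sBp : 0 < sBmax by rewrite lt_def nz sB0.
  move: hdt; rewrite ltr_pdivlMr ?mulr_gt0 // => h.
  by rewrite /Kr subr_gt0 -mulrA.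
have bmax : forall w, \big[Num.max/0]_(i < Nt) norm2 (blk x i - blk w i) <= norm2 (x - w).
  move=> w; apply: (big_ind (fun y => y <= norm2 (x - w))).
  - exact: norm2_ge0.
  - by move=> a b ha hb; rewrite ge_max ha hb.
  move=> i _; rewrite -blkB !norm2E ler_sqrt ?ns_ge0 //.
  rewrite [X in _ <= X]ns_blocks (bigD1 i) //= lerDl.
  by apply: sumr_ge0 => j _; exact: ns_ge0.
have key : forall w, inS x0 pi w ->
    norm2 (x - w) <= (P * Kr)^-1 * norm2 (Abar *m rbar T f x0 k alpha beta w).
  move=> w hw.
  set e := x - w.
  set d := @stack R Ns Nt (fun m => f (state x0 x m) (tgrid Nt T m) - f (state x0 w m) (tgrid Nt T m)).
  have hdiff := rbar_diff T f x0 alpha beta x w hk'.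
  rewrite hx sub0r -/e -/d in hdiff.
  set r := rbar T f x0 k alpha beta w in hdiff *.
  have hAe : A_LM Ns Nt k alpha *m e = - r + dt Nt T *: (B_LM Ns Nt k beta *m d).
    by rewrite hdiff subrK.
  have h1 := smin_bound hA e.
  have h2 : norm2 (A_LM Ns Nt k alpha *m e) <= norm2 r + dt Nt T * norm2 (B_LM Ns Nt k beta *m d).
    rewrite hAe; apply: le_trans (norm2D _ _) _.
    by rewrite norm2N norm2Z (ger0_norm (ltW dtpos)).
  have h3 := smax_bound hB d.
  have h4 : norm2 d <= Lf * norm2 e.
    rewrite !norm2E -(ger0_norm (ltW hLf)) -sqrtr_sqr -sqrtrM ?sqr_ge0 //.
    rewrite ler_sqrt; last by rewrite mulr_ge0 ?sqr_ge0 ?ns_ge0.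
    rewrite !ns_blocks mulr_sumr; apply: ler_sum => i _.
    rewrite blk_stack /= /e blkB -!norm2_sqr.
    have ht : 0 <= tgrid Nt T i.+1 <= T.
      apply/andP; split; first by rewrite /tgrid mulr_ge0 ?ler0n ?ltW.
      rewrite /tgrid /dt mulrA ler_pdivrMr ?ltr0n // mulrC ler_wpM2l ?ler_nat //; first exact: ltW.
    have := hlip (state x0 x i.+1) (state x0 w i.+1) _ ht.
    rewrite !state_succ => h.
    rewrite !valK -exprMn !expr2.
    by apply: ler_pM; rewrite ?norm2_ge0.
  have h5 : Kr * norm2 e <= norm2 r.
    have h6 : dt Nt T * norm2 (B_LM Ns Nt k beta *m d) <= dt Nt T * (sBmax * (Lf * norm2 e)).
      apply: ler_wpM2l; first exact: ltW.
      apply: le_trans h3 _; exact: ler_wpM2l.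
    have -> : Kr * norm2 e = sAmin * norm2 e - dt Nt T * (sBmax * (Lf * norm2 e)).
      rewrite /Kr; ring.
    lra.
  rewrite ler_pdivlMl ?mulr_gt0 //.
  apply: le_trans (hPbd w hw); rewrite -mulrA; apply: ler_wpM2l; [exact: ltW | exact: h5].
split.
  by move=> w hw; split; [exact: bmax | exact: key].
by move=> xt hxt _; split; [exact: bmax | exact: key].
Qed.
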